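(* Every Boolean metric space $X$ over a Boolean ring $B$ is isometric to a metrizable subset of a $B$-module equipped with its modular metric. Furthermore, for any fixed $x_{0}\in X$ there exist a $B$-module $M$, a metrizable subset $S\subseteq M$ with $0\in S$, and an isometry $g:X\to S$ (for the modular metric on $S$) with $g(x_{0})=0$.
   Context: $B$ is a Boolean ring ($a\vee b=a+b+ab$, $a\le b\iff ab=a$, $\bar a=1+a$); $B$ is a regular ring whose idempotents are all its elements. A Boolean metric space over $B$: set $X$ with $d:X\times X\to B$, $d(x,y)=0\iff x=y$, symmetric, $d(x,z)\le d(x,y)\vee d(y,z)$. An isometry is a bijection $f$ with $d(f(x),f(y))=d(x,y)$. For a regular ring $A$ and an $A$-module $M$, a subset $S\subseteq M$ is metrizable if for all $x,y\in S$ the annihilator ideal $\mathrm{Ann}(x-y)=\{a\in A: a(x-y)=0\}$ is principal; it then has a unique idempotent generator $a_{xy}$, and the modular metric on $S$ is $d(x,y)=1-a_{xy}$ (the complement of $a_{xy}$ in the Boolean ring of idempotents of $A$). *)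

(* Defs.v *)
From HB Require Import structures.
From mathcomp Require Import all_boot all_order all_algebra.
From Stdlib Require Import ClassicalEpsilon.
Set Implicit Arguments. Unset Strict Implicit. Unset Printing Implicit Defensive.
Import GRing.Theory.
Local Open Scope ring_scope.

Definition boolean_ring (B : comPzRingType) : Prop := forall a : B, a * a = a.

Definition bjoin (B : comPzRingType) (a b : B) : B := a + b + a * b.
Definition ble (B : comPzRingType) (a b : B) : Prop := a * b = a.

Definition boolean_metric (B : comPzRingType) (X : Type) (d : X -> X -> B) : Prop :=
  (forall x y, d x y = 0 <-> x = y) /\
  (forall x y, d x y = d y x) /\
  (forall x y z, ble (d x z) (bjoin (d x y) (d y z))).

Definition ann (B : comPzRingType) (M : lmodType B) (m : M) : B -> Prop :=
  fun c => c *: m = 0.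

Definition ann_gen (B : comPzRingType) (M : lmodType B) (x y : M) (a : B) : Prop :=
  a * a = a /\ (forall c, ann (x - y) c <-> exists r, c = r * a).

Definition metrizable (B : comPzRingType) (M : lmodType B) (S : M -> Prop) : Prop :=
  forall x y, S x -> S y -> exists a : B, ann_gen x y a.

(* The (idempotent) generator a_xy, chosen by epsilon (unique when it exists). *)
Definition ann_generator (B : comPzRingType) (M : lmodType B) (x y : M) : B :=
  epsilon (inhabits (0 : B)) (fun a => ann_gen x y a).

Definition modular_metric (B : comPzRingType) (M : lmodType B) (x y : M) : B :=
  1 - ann_generator x y.

Definition isometry_onto_modular (B : comPzRingType) (X : Type) (d : X -> X -> B)
  (M : lmodType B) (S : M -> Prop) (g : X -> M) : Prop :=
  (forall x, S (g x)) /\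
  (forall x y, g x = g y -> x = y) /\
  (forall m, S m -> exists x, g x = m) /\
  (forall x y, modular_metric (g x) (g y) = d x y).

(* Main.v *)
Require Import Defs.
From HB Require Import structures.
From mathcomp Require Import all_boot all_order all_algebra.
From Stdlib Require Import ClassicalEpsilon FunctionalExtensionality.
Import GRing.Theory.
Local Open Scope ring_scope.
Definition FB (X : Type) (B : comPzRingType) := X -> B.

Section Inst.
Variables (X : Type) (B : comPzRingType).
Definition fb_eq (f g : FB X B) : bool :=
  if excluded_middle_informative (f = g) then true else false.
Lemma fb_eqP : Equality.axiom fb_eq.
Proof. move=> f g; rewrite /fb_eq; case: excluded_middle_informative => h; by constructor. Qed.
HB.instance Definition _ := hasDecEq.Build (FB X B) fb_eqP.

Definition fb_find (P : pred (FB X B)) (n : nat) : option (FB X B) :=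
  match excluded_middle_informative (exists x, P x) with
  | left h => Some (proj1_sig (constructive_indefinite_description _ h))
  | right _ => None end.
Lemma fb_c1 P n x : fb_find P n = Some x -> P x.
Proof. rewrite /fb_find; case: excluded_middle_informative => // h [<-].
by case: constructive_indefinite_description. Qed.
Lemma fb_c2 (P : pred (FB X B)) : (exists x, P x) -> exists n, fb_find P n.
Proof. move=> h; exists 0%N; rewrite /fb_find; case: excluded_middle_informative => //. Qed.
Lemma fb_c3 (P Q : pred (FB X B)) : P =1 Q -> fb_find P =1 fb_find Q.
Proof. move=> h; have -> : P = Q by apply: functional_extensionality. by []. Qed.
HB.instance Definition _ := hasChoice.Build (FB X B) fb_c1 fb_c2 fb_c3.

Definition fb0 : FB X B := fun _ => 0.
Definition fbadd (f g : FB X B) : FB X B := fun z => f z + g z.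
Definition fbopp (f : FB X B) : FB X B := fun z => - f z.
Lemma fbA : associative fbadd.
Proof. move=> f g h; apply: functional_extensionality => z; exact: addrA. Qed.
Lemma fbC : commutative fbadd.
Proof. move=> f g; apply: functional_extensionality => z; exact: addrC. Qed.
Lemma fb0r : left_id fb0 fbadd.
Proof. move=> f; apply: functional_extensionality => z; exact: add0r. Qed.
Lemma fbNr : left_inverse fb0 fbopp fbadd.
Proof. move=> f; apply: functional_extensionality => z; exact: addNr. Qed.
HB.instance Definition _ := GRing.isZmodule.Build (FB X B) fbA fbC fb0r fbNr.

Definition fbscale (a : B) (f : FB X B) : FB X B := fun z => a * f z.
Lemma fbs1 a b v : fbscale a (fbscale b v) = fbscale (a * b) v.
Proof. apply: functional_extensionality => z; exact: mulrA. Qed.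
Lemma fbs2 : left_id 1 fbscale.
Proof. move=> f; apply: functional_extensionality => z; exact: mul1r. Qed.
Lemma fbs3 : right_distributive fbscale +%R.
Proof. move=> a f g; apply: functional_extensionality => z; exact: mulrDr. Qed.
Lemma fbs4 v : {morph fbscale^~ v: a b / a + b}.
Proof. move=> a b; apply: functional_extensionality => z; exact: mulrDl. Qed.
HB.instance Definition _ := GRing.Zmodule_isLmodule.Build B (FB X B) fbs1 fbs2 fbs3 fbs4.
End Inst.

Section Main.
Variables (B : comPzRingType) (X : Type) (d : X -> X -> B).
Hypothesis hB : boolean_ring B.
Hypothesis hd : boolean_metric d.

Lemma two0 (x : B) : x + x = 0.
Proof.
have := hB (x + x); rewrite mulrDl !mulrDr !hB => H.
by move/eqP: H; rewrite -subr_eq0 addrK => /eqP.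
Qed.

Lemma oppb (x : B) : - x = x.
Proof. by apply/eqP; rewrite -subr_eq0 -opprD two0 oppr0. Qed.

Lemma keyalg (a b p : B) :
  a * p + a * b + a * (p * b) = a -> b * p + b * a + b * (p * a) = b ->
  (a + b) * p = a + b.
Proof.
move=> H1 H2.
have E : a + b = (a * p + a * b + a * (p * b)) + (b * p + b * a + b * (p * a)) by rewrite H1 H2.
rewrite mulrDl E.
have -> : b * a = a * b by rewrite mulrC.
have -> : b * (p * a) = a * (p * b) by rewrite mulrCA [b * a]mulrC mulrCA.
rewrite addrACA two0 addr0 addrACA two0 addr0.
by rewrite ?[p * a]mulrC ?[p * b]mulrC.
Qed.

Lemma key x y z : (d x z - d y z) * d x y = d x z - d y z.
Proof.
case: hd => [h0 [hs ht]].
have H1 := ht x y z. have H2 := ht y x z.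
rewrite /ble /bjoin in H1 H2. rewrite (hs y x) in H2.
rewrite oppb; apply: keyalg.
  by rewrite -!mulrDr.
by rewrite -!mulrDr.
Qed.

Definition gmap (h : X -> B) (x : X) : FB X B := fun z => d x z - h z.

Lemma gdiff h x y z : (gmap h x - gmap h y) z = d x z - d y z.
Proof. by rewrite /= /fbadd /fbopp /gmap opprB addrA subrK. Qed.

Lemma ann_char h x y c : ann (gmap h x - gmap h y) c <-> c * d x y = 0.
Proof.
case: hd => [h0 [hs ht]].
rewrite /ann; split.
- move=> H; have := f_equal (fun f : FB X B => f y) H.
  change (c * (gmap h x - gmap h y) y = 0 -> c * d x y = 0).
  by rewrite gdiff (proj2 (h0 y y) erefl) subr0.
- move=> H; apply: functional_extensionality => z.
  change (c * (gmap h x - gmap h y) z = 0).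
  by rewrite gdiff -key mulrA [c * _]mulrC -mulrA H mulr0.
Qed.

Lemma gen_ok h x y : ann_gen (gmap h x) (gmap h y) (1 - d x y).
Proof.
split.
  by rewrite mulrBr mulr1 mulrBl mul1r hB subrr subr0.
move=> c; rewrite ann_char; split.
- move=> H; exists c; by rewrite mulrBr mulr1 H subr0.
- by move=> [r ->]; rewrite -mulrA mulrBl mul1r hB subrr mulr0.
Qed.

Lemma gen_uniq (M : lmodType B) (u v : M) a a' :
  ann_gen u v a -> ann_gen u v a' -> a = a'.
Proof.
move=> [ia ha] [ia' ha'].
have [r Hr] : exists r, a = r * a' by apply/ha'/ha; exists 1; rewrite mul1r.
have [s Hs] : exists s, a' = s * a by apply/ha/ha'; exists 1; rewrite mul1r.
have E1 : a * a' = a by rewrite {1}Hr -mulrA ia' -Hr.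
have E2 : a' * a = a' by rewrite {1}Hs -mulrA ia -Hs.
by rewrite -E1 mulrC E2.
Qed.

Lemma metric_eq h x y : modular_metric (gmap h x) (gmap h y) = d x y.
Proof.
rewrite /modular_metric /ann_generator.
have ex : exists a, ann_gen (gmap h x) (gmap h y) a by exists (1 - d x y); exact: gen_ok.
have := epsilon_spec (inhabits (0 : B)) _ ex.
move/(@gen_uniq _ _ _ _ _ (gen_ok h x y)) => <-.
by rewrite opprB addrC subrK.
Qed.

Lemma construct h :
  metrizable (fun m : FB X B => exists x, gmap h x = m) /\
  isometry_onto_modular d (fun m : FB X B => exists x, gmap h x = m) (gmap h).
Proof.
case: hd => [h0 [hs ht]].
split.
  move=> u v [x <-] [y <-]; exists (1 - d x y); exact: gen_ok.
split; first by move=> x; exists x.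
split.
  move=> x y E; have := f_equal (fun f : FB X B => f y) E.
  rewrite /gmap => /addIr; rewrite (proj2 (h0 y y) erefl) => /h0; done.
split; first by move=> m [x <-]; exists x.
exact: metric_eq.
Qed.
End Main.

Theorem mainTheorem13 (B : comPzRingType) (X : Type) (d : X -> X -> B)
    (hB : boolean_ring B) (hd : boolean_metric d) :
  (exists (M : lmodType B) (S : M -> Prop) (g : X -> M),
      metrizable S /\ isometry_onto_modular d S g) /\
  (forall x0 : X,
      exists (M : lmodType B) (S : M -> Prop) (g : X -> M),
        metrizable S /\ S 0 /\ isometry_onto_modular d S g /\ g x0 = 0).
Proof.
split.
  exists (FB X B : lmodType B), (fun m : FB X B => exists x, @gmap B X d (fun _ => 0) x = m), (@gmap B X d (fun _ => 0)).
  exact: (@construct B X d hB hd).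
move=> x0.
exists (FB X B : lmodType B), (fun m : FB X B => exists x, @gmap B X d (d x0) x = m), (@gmap B X d (d x0)).
have [H1 H2] := @construct B X d hB hd (d x0).
split; first exact: H1.
have E : @gmap B X d (d x0) x0 = (0 : FB X B).
  by apply: functional_extensionality => z; rewrite /gmap subrr.
split; first by exists x0.
by split.
Qed.
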